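(* Let $(U,\|\cdot\|)$ be a uniformly convex Banach space and let $Q\subseteq U$ be a nonempty, bounded, closed, convex set. Let $r>0$ and let $\{\beta_n\}_{n\in\mathbb{N}}$ be a sequence of positive real numbers with $\lim_{n\to\infty}\beta_n=1$. Suppose $T:Q\to Q$ satisfies: for all $p,q\in Q$ with $\|p-q\|<r$, $$\|T^np-T^nq\|\leq \beta_n\|p-q\|\quad\text{for every } n\in\mathbb{N}.$$ If there exists $q_0\in Q$ such that the asymptotic radius of the sequence $\{T^nq_0\}_n$ relative to $Q$ is less than $r$, then $T$ has a fixed point. Furthermore, the set of fixed points of $T$ is closed.
   Context: A map $T$ as in the statement is called uniformly local asymptotic nonexpansive. For a bounded sequence $\{x_n\}_n$ in $U$, its asymptotic radius relative to $Q$ is $\rho=\inf_{y\in Q}\limsup_{n\to\infty}\|x_n-y\|$. *)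

(* Defs.v *)
From HB Require Import structures.
From mathcomp Require Import all_boot all_order all_algebra.
From mathcomp Require Import all_classical all_reals all_analysis.
Set Implicit Arguments. Unset Strict Implicit. Unset Printing Implicit Defensive.
Import Order.TTheory GRing.Theory Num.Theory.
Import numFieldNormedType.Exports.
Local Open Scope classical_set_scope.
Local Open Scope ring_scope.

Definition uniformly_convex (R : realType) (U : normedModType R) : Prop :=
  forall eps : R, 0 < eps -> eps <= 2 ->
    exists2 delta : R, 0 < delta &
      forall x y : U, `|x| <= 1 -> `|y| <= 1 -> eps <= `|x - y| ->
        `|(2^-1) *: (x + y)| <= 1 - delta.

Definition bounded_set_norm (R : realType) (U : normedModType R) (Q : set U) : Prop :=
  exists M : R, forall x, Q x -> `|x| <= M.

Definition convex_set_in (R : realType) (U : normedModType R) (Q : set U) : Prop :=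
  forall x y t, Q x -> Q y -> 0 <= t -> t <= 1 -> Q (t *: x + (1 - t) *: y).

Definition asymptotic_radius (R : realType) (U : normedModType R)
  (Q : set U) (x : nat -> U) : \bar R :=
  ereal_inf [set limn_esup (fun n => (`|x n - y|)%:E) | y in Q].

(* Main.v *)
Require Import Defs.
From HB Require Import structures.
From mathcomp Require Import all_boot all_order all_algebra.
From mathcomp Require Import all_classical all_reals all_analysis.
From mathcomp Require Import lra ring.
Import Order.TTheory GRing.Theory Num.Theory.
Import numFieldNormedType.Exports.
Local Open Scope classical_set_scope.
Local Open Scope ring_scope.

Definition ev (P : nat -> Prop) := exists N, forall n, (N <= n)%N -> P n.

Lemma ev_and P1 P2 : ev P1 -> ev P2 -> ev (fun n => P1 n /\ P2 n).
Proof.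
move=> [N1 H1] [N2 H2]; exists (maxn N1 N2) => n Hn; split.
  by apply: H1; apply: leq_trans Hn; exact: leq_maxl.
by apply: H2; apply: leq_trans Hn; exact: leq_maxr.
Qed.

Lemma ev_impl (P1 P2 : nat -> Prop) : (forall n, P1 n -> P2 n) -> ev P1 -> ev P2.
Proof. by move=> H [N HN]; exists N => n /HN /H. Qed.

Lemma ev_witness P : ev P -> exists n, P n.
Proof. by move=> [N HN]; exists N; apply: HN. Qed.

Arguments ev_and {P1 P2}.
Arguments ev_impl {P1 P2}.
Arguments ev_witness {P}.

Lemma divle1 (R : realType) (d n : R) : 0 < d -> n <= d -> d^-1 * n <= 1.
Proof. by move=> d0 nd; rewrite ler_pdivrMl // mulr1. Qed.

Section S.
Variables (R : realType) (U : normedModType R) (Q : set U) (x : nat -> U).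

Definition Aset := [set c : R | exists2 y, Q y & ev (fun n => `|x n - y| <= c)].

Lemma Aset_ge0 c : Aset c -> 0 <= c.
Proof. by move=> [y _ /ev_witness [n Hn]]; apply: le_trans Hn. Qed.

Lemma Aset_lb : has_lbound Aset.
Proof. by exists 0 => c /Aset_ge0. Qed.

Definition rho := inf Aset.

Lemma rho_le c : Aset c -> rho <= c.
Proof. by move=> Hc; apply: ge_inf Hc; exact: Aset_lb. Qed.

Hypothesis Ane : Aset !=set0.

Lemma rho_ge0 : 0 <= rho.
Proof. by apply: lb_le_inf => // c /Aset_ge0. Qed.

Lemma rho_adh e : 0 < e -> exists2 y, Q y & ev (fun n => `|x n - y| <= rho + e).
Proof.
move=> e0; have [c [y Qy Hy] ce] := inf_adherent e0 (conj Ane Aset_lb).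
exists y => //; apply: ev_impl Hy => n Hn; apply: le_trans Hn _.
by rewrite /rho ltW.
Qed.


Lemma mid_id (a b y : U) :
  y - ((2^-1 : R) *: a + (1 - 2^-1) *: b) = (2^-1 : R) *: ((y - a) + (y - b)).
Proof.
have -> : (1 - 2^-1 : R) = 2^-1 by field.
rewrite scalerDr !scalerBr addrACA -scalerDl.
have -> : (2^-1 + 2^-1 : R) = 1 by field.
by rewrite scale1r opprD.
Qed.

Hypothesis UC : uniformly_convex U.
Hypothesis CV : convex_set_in Q.

Lemma keyK eps : 0 < eps -> exists2 eta, 0 < eta & forall a b, Q a -> Q b ->
  ev (fun n => `|x n - a| <= rho + eta) -> ev (fun n => `|x n - b| <= rho + eta) ->
  `|a - b| <= eps.
Proof.
move=> eps0.
have r0 := rho_ge0.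
have tri : forall a b eta, ev (fun n => `|x n - a| <= rho + eta) ->
    ev (fun n => `|x n - b| <= rho + eta) -> `|a - b| <= 2 * (rho + eta).
  move=> a b eta Ha Hb; have [n [Hna Hnb]] := ev_witness (ev_and Ha Hb).
  apply: le_trans (ler_distD (x n) a b) _.
  by rewrite distrC; lra.
have [rsmall|rbig] := ltP rho (eps / 4).
  exists (eps / 4); first lra.
  move=> a b _ _ Ha Hb; apply: le_trans (tri _ _ _ Ha Hb) _; lra.
set D := rho + 1.
have D0 : 0 < D by rewrite /D; lra.
set e0 := Num.min (eps / D) 2.
have e00 : 0 < e0 by rewrite lt_min; apply/andP; split; [exact: divr_gt0|lra].
have e02 : e0 <= 2 by rewrite ge_min lexx orbT.
have e0D : e0 <= eps / D by rewrite /e0 ge_min lexx.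
have [delta d0 Hd] := UC e0 e00 e02.
set d' := Num.min delta (2^-1).
have d'0 : 0 < d' by rewrite lt_min d0 /=; lra.
have d'd : d' <= delta by rewrite ge_min lexx.
have d'h : d' <= 2^-1 by rewrite ge_min lexx orbT.
set eta := Num.min 1 (rho * d' / 2).
have rp : 0 < rho by lra.
have eta0 : 0 < eta by rewrite lt_min ltr01 /=; apply: divr_gt0 => //; exact: mulr_gt0.
have eta1 : eta <= 1 by rewrite ge_min lexx.
have eta2 : eta <= rho * d' / 2 by rewrite ge_min lexx orbT.
exists eta => // a b Qa Qb Ha Hb.
rewrite leNgt; apply/negP => Hab.
set d := rho + eta.
have dpos : 0 < d by rewrite /d; lra.
have dinv : 0 <= d^-1 by rewrite invr_ge0 ltW.
set m := (2^-1 : R) *: a + (1 - 2^-1) *: b.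
have Qm : Q m by apply: CV => //; lra.
have Am : Aset (d * (1 - delta)).
  exists m => //; apply: ev_impl (ev_and Ha Hb) => n [Hna Hnb].
  pose u := d^-1 *: (x n - a); pose v := d^-1 *: (x n - b).
  have nu : `|u| <= 1.
    rewrite /u normrZ (ger0_norm dinv).
    exact: divle1.
  have nv : `|v| <= 1.
    rewrite /v normrZ (ger0_norm dinv).
    exact: divle1.
  have nuv : e0 <= `|u - v|.
    have -> : u - v = d^-1 *: (b - a).
      by rewrite /u /v -scalerBr; congr (_ *: _); rewrite opprB addrC addrA subrK.
    rewrite normrZ (ger0_norm dinv) distrC.
    apply: le_trans e0D _.
    have dD : d <= D by rewrite /d /D; lra.
    apply: (@le_trans _ _ (eps / d)).
      by apply: ler_pM => //; [lra| rewrite invr_ge0; lra| rewrite lef_pV2 ?posrE].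
    by rewrite mulrC ler_pM // ?invr_ge0; lra.
  have := Hd u v nu nv nuv.
  have -> : (2^-1 : R) *: (u + v) = d^-1 *: (x n - m).
    by rewrite /m mid_id /u /v -scalerDr !scalerA mulrC.
  rewrite normrZ (ger0_norm dinv) ler_pdivrMl //.
have := rho_le _ Am.
have : d * (1 - delta) <= d * (1 - d') by rewrite ler_pM2l //; lra.
rewrite /d => H1 H2.
have : rho <= (rho + eta) * (1 - d') by lra.
nra.
Qed.

End S.
Arguments Aset {R U}.
Arguments rho {R U}.
Arguments rho_le {R U Q x c}.
Arguments rho_ge0 {R U Q x}.
Arguments rho_adh {R U Q x} Ane {e}.
Arguments keyK {R U Q x} Ane UC CV eps.

Lemma near_ev (P : nat -> Prop) : (\forall k \near \oo, P k) -> ev P.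
Proof. by move=> [N _ HN]; exists N => n Nn; apply: HN. Qed.

Lemma close_fix (R : realType) (U : normedModType R) (Q : set U) (T : U -> U)
  (r b1 : R) (p : U) : 0 < r -> 0 < b1 ->
  (forall p q, Q p -> Q q -> `|p - q| < r -> `|T p - T q| <= b1 * `|p - q|) ->
  Q p ->
  (forall e, 0 < e -> exists w, [/\ Q w, `|w - p| <= e & `|T w - p| <= e]) ->
  T p = p.
Proof.
move=> r0 b0 L Qp H.
have : `|T p - p| <= 0.
  apply/ler_addgt0Pr => e e0; rewrite add0r.
  set e' := Num.min (e / (b1 + 1)) (r / 2).
  have e'0 : 0 < e' by rewrite lt_min; apply/andP; split; apply: divr_gt0 => //; lra.
  have e'1 : e' <= e / (b1 + 1) by rewrite ge_min lexx.
  have e'2 : e' <= r / 2 by rewrite ge_min lexx orbT.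
  have [w [Qw Hw1 Hw2]] := H e' e'0.
  have Lw := L w p Qw Qp ltac:(lra).
  apply: le_trans (ler_distD (T w) (T p) p) _.
  rewrite distrC.
  have : b1 * `|w - p| <= b1 * e' by rewrite ler_pM2l.
  have : e' * (b1 + 1) <= e by rewrite -ler_pdivlMr //; lra.
  lra.
by rewrite normr_le0 subr_eq0 => /eqP.
Qed.

Arguments close_fix {R U Q T r b1 p}.
Arguments near_ev {P}.

Theorem mainTheorem1 (R : realType) (U : completeNormedModType R)
  (Q : set U) (r : R) (beta : nat -> R) (T : U -> U) :
  uniformly_convex U ->
  Q !=set0 -> bounded_set_norm Q -> closed Q -> convex_set_in Q ->
  0 < r ->
  (forall n, 0 < beta n) -> beta n @[n --> \oo] --> (1 : R) ->
  (forall p, Q p -> Q (T p)) ->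
  (forall p q, Q p -> Q q -> `|p - q| < r ->
     forall n, (0 < n)%N -> `|iter n T p - iter n T q| <= beta n * `|p - q|) ->
  (exists2 q0, Q q0 & (asymptotic_radius Q (fun n => iter n T q0) < r%:E)%E) ->
  (exists2 x, Q x & T x = x) /\ closed [set x | Q x /\ T x = x].
Proof.
move=> UC Qne _ Qcl CV r0 b0 bcvg TQ Lip [q0 Qq0 Hrad].
have L1 : forall p q, Q p -> Q q -> `|p - q| < r -> `|T p - T q| <= beta 1 * `|p - q|.
  by move=> p q Qp Qq pq; exact: (Lip p q Qp Qq pq 1%N).
have iQ : forall n p, Q p -> Q (iter n T p).
  by move=> n p Qp; elim: n => [|n IH] //=; apply: TQ.
split; last first.
  move=> p Hp.
  have Qp : Q p by apply: Qcl; apply: closureS Hp => w [].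
  split => //; apply: (close_fix r0 (b0 1%N) L1 Qp) => e e0.
  have [w [[Qw Tw] bw]] := Hp _ (nbhsx_ballx p e e0).
  move: bw; rewrite -ball_normE /= => bw.
  by exists w; split => //; rewrite ?Tw distrC ltW.
pose x := fun n => iter n T q0.
have [c Ac cr] : exists2 c, Aset Q x c & c < r.
  move: Hrad => /ereal_inf_lt [_ [y0 Qy0 <-]].
  rewrite /limn_esup /limf_esup => /ereal_inf_lt [_ [V HV <-]] Hs.
  have [N _ HN] := HV.
  have sge : ((`|x N - y0|)%:E <= ereal_sup ((fun n => (`|x n - y0|)%:E) @` V))%E.
    have hh : [set `|x n - y0|%:E | n in V] (`|x N - y0|%:E)%E by exists N => //; apply: HN => /=.
    exact: (@ereal_sup_ubound R _ _ hh).
  move: sge Hs; case Es: (ereal_sup _) => [s| |] sge Hs //.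
    exists s; last by rewrite -lte_fin.
    exists y0 => //; exists N => n Nn.
    rewrite -lee_fin -Es; have hh : [set `|x n - y0|%:E | n in V] (`|x n - y0|%:E)%E by exists n => //; apply: HN.
    exact: (@ereal_sup_ubound R _ _ hh).
have Ane : Aset Q x !=set0 by exists c.
have rr : rho Q x < r by apply: le_lt_trans (rho_le Ac) cr.
have r0' := rho_ge0 Ane.
have ys : forall k : nat, {y | Q y & ev (fun n => `|x n - y| <= rho Q x + k.+1%:R^-1)}.
  by move=> k; apply: cid2; apply: rho_adh => //.
pose y := fun k => sval (ys k).
have Qy : forall k, Q (y k) by move=> k; rewrite /y; case: (ys k).
have Hy : forall k, ev (fun n => `|x n - y k| <= rho Q x + k.+1%:R^-1).
  by move=> k; rewrite /y; case: (ys k).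
have small : forall e : R, 0 < e -> ev (fun k => k.+1%:R^-1 <= e).
  move=> e e0; apply: near_ev; apply: filterS (near_infty_natSinv_lt (PosNum e0)).
  by move=> k /ltW.
have ycv : cvgn y.
  apply: cauchy_cvg; apply: cauchy_exP => e e0.
  have [eta eta0 HK] := keyK Ane UC CV (e/2) ltac:(lra).
  have [K HK'] := small eta eta0.
  exists (y K); exists K => // k /= Kk.
  rewrite -ball_normE /=.
  have := HK (y K) (y k) (Qy K) (Qy k).
  have mono : forall j, (K <= j)%N -> ev (fun n => `|x n - y j| <= rho Q x + eta).
    move=> j Kj; apply: ev_impl (Hy j) => n Hn; apply: le_trans Hn _.
    by rewrite lerD2l; apply: HK'.
  move=> /(_ (mono K (leqnn K)) (mono k Kk)); lra.
set z := limn y.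
have yz : y n @[n --> \oo] --> z by exact: ycv.
have Qz : Q z.
  apply: (closed_cvg Q Qcl _ z yz).
  by apply: nearW => k; exact: Qy.
have Hz : forall e, 0 < e -> ev (fun n => `|x n - z| <= rho Q x + e).
  move=> e e0; have e2 : 0 < e / 2 by lra.
  have [K1 HK1] := near_ev ((cvgrPdist_le _ _).1 yz (e/2) e2).
  have [K2 HK2] := small (e/2) e2.
  set k := maxn K1 K2.
  have h1 := HK1 k (leq_maxl _ _); have h2 := HK2 k (leq_maxr _ _).
  apply: ev_impl (Hy k) => n Hn.
  apply: le_trans (ler_distD (y k) (x n) z) _.
  rewrite distrC in h1; apply: le_trans (lerD Hn h1) _; move: h2; set t := k.+1%:R^-1; lra.
have Horb : forall m e, (0 < m)%N -> 0 < e -> rho Q x + e < r ->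
    ev (fun n => `|x n - iter m T z| <= beta m * (rho Q x + e)).
  move=> m e m0 e0 er.
  have [N HN] := Hz e e0.
  exists (N + m)%N => n Nn.
  have mn : (m <= n)%N := leq_trans (leq_addl N m) Nn.
  have nE : n = (m + (n - m))%N by rewrite subnKC.
  have Nnm : (N <= n - m)%N by rewrite (leq_subRL _ mn) addnC.
  have h := HN _ Nnm.
  rewrite /x nE iterD -/(x (n - m)%N).
  have Lp := Lip (x (n - m)%N) z (iQ _ _ Qq0) Qz ltac:(lra) m m0.
  apply: le_trans Lp _; rewrite ler_pM2l //.
have Hconv : forall e, 0 < e -> ev (fun m => `|iter m T z - z| <= e).
  move=> e e0.
  have [eta eta0 HK] := keyK Ane UC CV e e0.
  set th := eta / (3 * (rho Q x + 1)).
  have th0 : 0 < th by apply: divr_gt0 => //; lra.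
  have thE : th * (rho Q x + 1) = eta / 3 by rewrite /th; field; lra.
  set e' := Num.min (Num.min (eta / 3) ((r - rho Q x) / 2)) 1.
  have e'0 : 0 < e' by rewrite !lt_min; apply/andP; split; [apply/andP; split|]; lra.
  have e'1 : e' <= eta / 3 by rewrite !ge_min lexx.
  have e'2 : e' <= (r - rho Q x) / 2 by rewrite !ge_min lexx orbT.
  have e'3 : e' <= 1 by rewrite !ge_min lexx !orbT.
  have [M HM] := near_ev ((cvgrPdist_le _ _).1 bcvg th th0).
  exists M.+1 => m Mm.
  have hb := HM m (ltnW Mm).
  have m0 : (0 < m)%N by apply: leq_trans Mm.
  apply: (HK (iter m T z) z (iQ _ _ Qz) Qz); last first.
    exact: Hz eta eta0.
  apply: ev_impl (Horb m e' m0 e'0 ltac:(lra)) => n Hn.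
  apply: le_trans Hn _.
  have bm : beta m <= 1 + th.
    move: hb; rewrite ler_norml => /andP [h _]; lra.
  have : beta m * (rho Q x + e') <= (1 + th) * (rho Q x + e').
    by rewrite ler_pM2r //; lra.
  have : th * (rho Q x + e') <= th * (rho Q x + 1) by rewrite ler_pM2l //; lra.
  lra.
exists z => //.
apply: (close_fix r0 (b0 1%N) L1 Qz) => e e0.
have [M HM] := Hconv e e0.
exists (iter M T z); split => //; first exact: iQ.
  exact: (HM M (leqnn M)).
by have := HM M.+1 (leqnSn M).
Qed.
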